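(* Let $\Pi$ be a Lévy measure on $\mathbb{R}^d$ and assume $\overline{V}(t):=\int_{|y|\le t}|y|^2\,\Pi(dy)>0$ for all $t>0$. Let $g:[0,\infty)\to(0,\infty)$ be non-decreasing with $\int_0^c g(t)^{-1}dt<\infty$ for all $c>0$. Then $$\int_{|y|\le1}\frac{|y|^2}{g(\overline{V}(|y|))}\,\Pi(dy)<\infty.$$
   Context: A Lévy measure $\Pi$ satisfies $\Pi(\{0\})=0$ and $\int(1\wedge|y|^2)\Pi(dy)<\infty$; $|\cdot|$ is the Euclidean norm. *)

(* Defs.v *)
From HB Require Import structures.
From mathcomp Require Import all_boot all_order all_algebra.
From mathcomp Require Import all_classical all_reals all_analysis.
Import Order.TTheory GRing.Theory Num.Theory.
Import numFieldNormedType.Exports.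
Local Open Scope classical_set_scope.
Local Open Scope ring_scope.

(* R^d as row vectors 'rV[R]_d, with the Borel sigma-algebra
   (sigma-algebra generated by the open sets of the product topology). *)
Definition Rd (R : realType) (d : nat) :=
  g_sigma_algebraType (@open 'rV[R]_d).

Definition enorm {R : realType} {d : nat} (y : 'rV[R]_d) : R :=
  Num.sqrt (\sum_(i < d) (y ord0 i) ^+ 2).

Definition levy_measure {R : realType} {d : nat}
  (Pi : {measure set (Rd R d) -> \bar R}) : Prop :=
  Pi [set (0 : 'rV[R]_d)] = 0%E /\
  (\int[Pi]_y (Num.min 1 (enorm y ^+ 2))%:E < +oo)%E.

Definition Vbar {R : realType} {d : nat}
  (Pi : {measure set (Rd R d) -> \bar R}) (t : R) : \bar R :=
  (\int[Pi]_(y in [set y : Rd R d | (enorm y <= t)%R]) (enorm y ^+ 2)%:E)%E.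

(* Main.v *)
Require Import Defs.
From HB Require Import structures.
From mathcomp Require Import all_boot all_order all_algebra.
From mathcomp Require Import all_classical all_reals all_analysis.
From mathcomp Require Import measurable_realfun.
From mathcomp Require Import ring lra.
Import Order.TTheory GRing.Theory Num.Theory.
Import numFieldNormedType.Exports.
Local Open Scope classical_set_scope.
Local Open Scope ring_scope.

Section S.
Context {R : realType} {d : nat}.

Lemma enorm_cont : continuous (fun y : 'rV[R]_d => enorm y).
Proof.
move=> y; rewrite /enorm.
apply: continuous_comp; last exact: sqrt_continuous.
have := @cvg_big R 'I_d +%R 0 xpredT add_continuous 'rV[R]_d (nbhs y) (index_enum 'I_d)
  (fun i (z : 'rV[R]_d) => z ord0 i ^+ 2) (fun i => y ord0 i ^+ 2) _.
apply => // i _; rewrite expr2; apply: cvgM; exact: coord_continuous.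
Qed.

Lemma enorm_meas : measurable_fun setT (fun y : Rd R d => enorm y).
Proof.
apply: (measurability (@RGenOInfty.G R)).
  exact: RGenOInfty.measurableE.
move=> _ [_ [x ->] <-]; rewrite setTI.
apply: sub_sigma_algebra => /=.
apply: open_comp; first by move=> z _; exact: enorm_cont.
exact: rray_open.
Qed.
End S.


Section Main.
Context {R : realType} {d : nat}.
Variable Pi : {measure set (Rd R d) -> \bar R}.
Hypothesis HL : levy_measure Pi.
Hypothesis HV : forall t : R, 0 < t -> (0 < Vbar Pi t)%E.

Local Notation f := (fun y : Rd R d => enorm y ^+ 2).
Local Notation B := (fun t : R => [set y : Rd R d | enorm y <= t]).
Local Notation F := (fun t : R => fine (Vbar Pi t)).

Lemma enorm_ge0 (y : Rd R d) : 0 <= enorm y.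
Proof. exact: sqrtr_ge0. Qed.

Lemma mB t : measurable (B t).
Proof.
have := @enorm_meas R d measurableT `]-oo, t]%classic (measurable_itv _).
by rewrite setTI; congr measurable; apply/seteqP; split => y /=; rewrite in_itv.
Qed.

Lemma mf : measurable_fun setT (fun y : Rd R d => (f y)%:E).
Proof.
apply/measurable_EFinP; apply: measurable_funX; exact: enorm_meas.
Qed.

Lemma mf' D : measurable_fun D (fun y : Rd R d => (f y)%:E).
Proof. exact: measurable_funS mf. Qed.

Lemma Vbar_ge0 t : (0 <= Vbar Pi t)%E.
Proof. by apply: integral_ge0 => y _; rewrite lee_fin sqr_ge0. Qed.

Lemma Vbar_le s t : s <= t -> (Vbar Pi s <= Vbar Pi t)%E.
Proof.
move=> st; apply: ge0_subset_integral => //; try exact: mB.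
- exact: mf'.
- by move=> y _; rewrite lee_fin sqr_ge0.
- by move=> y /= ys; exact: le_trans st.
Qed.

Lemma Vbar1_fin : (Vbar Pi 1%R < +oo)%E.
Proof.
case: HL => _ H; apply: le_lt_trans H.
have mm : measurable_fun setT (fun y : Rd R d => (Num.min 1 (f y))%:E).
  apply/measurable_EFinP; apply: measurable_minr => //.
  apply: measurable_funX; exact: enorm_meas.
have h1 : (Vbar Pi 1%R <= \int[Pi]_(y in B 1%R) (Num.min 1 (f y))%:E)%E.
  apply: ge0_le_integral => //; first exact: mB.
  - by move=> y _; rewrite lee_fin sqr_ge0.
  - exact: mf'.
  - exact: measurable_funS mm.
  - move=> y /= y1; rewrite lee_fin le_min lexx andbT.
    by rewrite -(expr1n _ 2) (ler_pXn2r (n:=2)) ?nnegrE ?enorm_ge0.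
apply: le_trans h1 _.
apply: ge0_subset_integral => //; first exact: mB.
by move=> y _; rewrite lee_fin le_min ler01 sqr_ge0.
Qed.
Lemma Vbar_fin t : t <= 1 -> Vbar Pi t \is a fin_num.
Proof.
move=> t1; rewrite ge0_fin_numE ?Vbar_ge0//.
exact: le_lt_trans (Vbar_le _ _ t1) Vbar1_fin.
Qed.

Lemma EF t : t <= 1 -> (F t)%:E = Vbar Pi t.
Proof. by move=> t1; rewrite fineK// Vbar_fin. Qed.

Lemma F_ge0 t : 0 <= F t.
Proof. exact/fine_ge0/Vbar_ge0. Qed.

Lemma F_le s t : s <= t -> t <= 1 -> F s <= F t.
Proof.
move=> st t1; rewrite -lee_fin !EF//; last exact: le_trans t1.
exact: Vbar_le.
Qed.

Definition Fc (t : R) := F (Num.min t 1).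

Lemma Fc_nd : {homo Fc : s t / s <= t}.
Proof.
move=> s t st; rewrite /Fc; apply: F_le; last by rewrite ge_min lexx orbT.
exact: le_min2.
Qed.

Lemma mFc : measurable_fun setT (fun y : Rd R d => Fc (enorm y)).
Proof.
apply: measurableT_comp; last exact: enorm_meas.
by apply: nondecreasing_measurable => //; exact: Fc_nd.
Qed.

Definition S (a : R) := [set y : Rd R d | enorm y <= 1 /\ F (enorm y) <= a].

Lemma mS a : measurable (S a).
Proof.
have := mFc measurableT `]-oo, a]%classic (measurable_itv _).
rewrite setTI => h.
have -> : S a = B 1%R `&` ((fun y => Fc (enorm y)) @^-1` `]-oo, a]%classic).
  apply/seteqP; split => y /=; rewrite in_itv /= /Fc.
    by move=> [y1 ya]; split => //; rewrite (min_idPl y1).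
  by move=> [y1 ya]; split => //; rewrite -(min_idPl y1).
exact: measurableI (mB _) h.
Qed.

Lemma sub_int (A C : set (Rd R d)) : measurable A -> measurable C -> A `<=` C ->
  (\int[Pi]_(y in A) (f y)%:E <= \int[Pi]_(y in C) (f y)%:E)%E.
Proof.
move=> mA mC AC; apply: ge0_subset_integral => //; first exact: mf'.
by move=> y _; rewrite lee_fin sqr_ge0.
Qed.

Lemma key_ball a y : S a y -> (\int[Pi]_(z in B (enorm y)) (f z)%:E <= a%:E)%E.
Proof. by move=> [y1 ya]; rewrite -[X in (X <= _)%E]/(Vbar Pi (enorm y)) -EF// lee_fin. Qed.

Arguments key_ball {a y}.

Lemma key a : 0 <= a -> (\int[Pi]_(y in S a) (f y)%:E <= a%:E)%E.
Proof.
move=> a0.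
have f0 : forall D y, D y -> (0 <= (f y)%:E)%E.
  by move=> D y _; rewrite lee_fin sqr_ge0.
case: (pselect (exists y, S a y)) => [[y0 Sy0]|nS]; last first.
  have -> : S a = set0 by apply/seteqP; split => y // Sy; apply: nS; exists y.
  by rewrite integral_set0 lee_fin.
pose E := [set enorm y | y in S a].
have hsE : has_sup E.
  split; first by exists (enorm y0), y0.
  by exists 1 => _ [y [y1 _] <-].
pose r := sup E.
have ub y : S a y -> enorm y <= r by move=> Sy; apply: sup_upper_bound => //; exists y.
case: (pselect (exists y, S a y /\ enorm y = r)) => [[y1 [Sy1 ry1]]|nA].
  apply: le_trans (key_ball Sy1).
  apply: sub_int; [exact: mS|exact: mB|].
  by move=> z Sz /=; rewrite ry1; exact: ub.
pose En (n : nat) := B (r - n.+1%:R^-1).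
have mEn n : measurable (En n) by exact: mB.
have ndE : nondecreasing_seq En.
  move=> m n mn; rewrite subsetEset => z /= zm; apply: le_trans zm _.
  by rewrite lerD2l lerN2 lef_pV2 ?posrE// ler_nat.
have sub : S a `<=` \bigcup_n En n.
  move=> z Sz; have zr : enorm z < r.
    by rewrite lt_neqAle ub // andbT; apply/eqP => h; apply: nA; exists z.
  exists (Num.trunc ((r - enorm z)^-1)) => //=.
  rewrite /En /= lerBrDr addrC -lerBrDr.
  rewrite -[X in _ <= X](invrK (r - enorm z)) lef_pV2 ?posrE ?invr_gt0 ?subr_gt0//.
  exact/ltW/truncnS_gt.
apply: le_trans (_ : (\int[Pi]_(y in \bigcup_n En n) (f y)%:E <= _)%E).
  apply: sub_int; [exact: mS|exact: bigcupT_measurable|exact: sub].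
have hc := @ge0_nondecreasing_set_cvg_integral _ _ _ En (fun y => (f y)%:E) Pi ndE mEn
  (fun n => mf' _) (fun n y _ => f0 _ y I).
rewrite -(cvg_lim _ hc) //; apply: lime_le; first exact: cvgP hc.
apply: nearW => n.
have [y Sy ry] := @sup_adherent _ E (n.+1%:R^-1) ltac:(by rewrite invr_gt0) hsE.
case: Sy => y' Sy' <- in ry.
apply: le_trans (key_ball Sy').
apply: sub_int; [exact: mB|exact: mB|].
by move=> z /= zr; apply: le_trans zr (ltW ry).
Qed.

Variable g : R -> R.
Hypothesis Hg0 : forall t : R, 0 <= t -> 0 < g t.
Hypothesis Hgnd : forall s t : R, 0 <= s -> s <= t -> g s <= g t.

Definition V := F 1.

Lemma Vpos : 0 < V.
Proof. by rewrite -lte_fin /V EF// HV. Qed.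

Definition a (k : nat) := V / 2 ^+ k.

Lemma a_gt0 k : 0 < a k.
Proof. by rewrite divr_gt0 ?Vpos ?exprn_gt0. Qed.

Lemma a_le m n : (m <= n)%N -> a n <= a m.
Proof.
move=> mn; rewrite /a ler_pM2l ?Vpos// lef_pV2 ?posrE ?exprn_gt0//.
by apply: ler_weXn2l => //; rewrite ler1n.
Qed.

Lemma a0 : a 0 = V.
Proof. by rewrite /a expr0 divr1. Qed.

Lemma aS k : a k.+1 = a k / 2.
Proof. by rewrite /a exprS invfM mulrA mulrAC. Qed.

Lemma a_diff k : a k.+1 - a k.+2 = a k / 4.
Proof. by rewrite !aS; field. Qed.

Definition c k := (g (a k.+1))^-1.

Lemma c_ge0 k : 0 <= c k.
Proof. by rewrite invr_ge0 ltW// Hg0// ltW// a_gt0. Qed.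

Definition u k := (fun y : Rd R d => (c k * f y)%:E) \_ (S (a k)).

Lemma u_ge0 k y : (0 <= u k y)%E.
Proof.
apply: erestrict_ge0 => z _; rewrite lee_fin mulr_ge0 ?c_ge0 ?sqr_ge0//.
Qed.

Lemma mu_ k : measurable_fun setT (u k).
Proof.
apply/(measurable_restrictT _ (mS _)); apply/measurable_EFinP.
apply: measurable_funM => //; apply: measurable_funX.
exact: measurable_funS (@enorm_meas R d).
Qed.

Lemma exists_k x : 0 < x -> x <= V -> exists k, a k.+1 < x /\ x <= a k.
Proof.
move=> x0 xV.
have ex : exists n, a n.+1 < x.
  exists (Num.trunc (V / x)); rewrite /a ltr_pdivrMr ?exprn_gt0//.
  rewrite -ltr_pdivrMl// mulrC.
  apply: lt_le_trans (truncnS_gt _) _.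
  apply: le_trans (_ : (2 ^+ (Num.trunc (V / x)).+1 : R) <= _); last exact: lexx.
  by rewrite -natrX ler_nat ltnW// ltn_expl.
case: (ex_minnP ex) => k ak kmin; exists k; split => //.
case: k ak kmin => [|k] ak kmin; first by rewrite a0.
by rewrite leNgt; apply/negP => /kmin; rewrite ltnn.
Qed.

Lemma ptwise y : B 1%R y ->
  ((f y / g (F (enorm y)))%:E <= \sum_(k <oo) u k y)%E.
Proof.
move=> y1.
have [x0|xpos] := eqVneq (F (enorm y)) 0.
  have ey : enorm y = 0.
    apply/eqP; rewrite eq_le enorm_ge0 andbT leNgt; apply/negP => ey.
    by have := HV _ ey; rewrite -EF// x0 ltxx.
  rewrite ey expr0n /= mul0r; apply: nneseries_ge0 => n _ _; exact: u_ge0.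
have xgt0 : 0 < F (enorm y) by rewrite lt_neqAle eq_sym xpos F_ge0.
have [k [k1 k2]] := exists_k _ xgt0 (F_le _ _ y1 (lexx _)).
apply: le_trans (_ : (u k y <= _)%E); last first.
  apply: le_trans (nneseries_lim_ge k.+1 (fun n _ _ => u_ge0 n y)).
  by rewrite big_nat_recr//= leeDr// sume_ge0// => n _; exact: u_ge0.
rewrite /u patchE mem_set; last by split.
rewrite lee_fin mulrC ler_wpM2r ?sqr_ge0// /c lef_pV2 ?posrE.
- by apply: Hgnd; [exact/ltW/a_gt0|exact/ltW].
- exact/Hg0/F_ge0.
- exact/Hg0/ltW/a_gt0.
Qed.

Lemma pi_side : (\int[Pi]_(y in B 1%R) (\sum_(k <oo) u k y) <=
  \sum_(k <oo) (c k * a k)%:E)%E.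
Proof.
rewrite integral_nneseries//; last 3 first.
- exact: mB.
- by move=> n; exact: measurable_funS (mu_ n).
- by move=> n y _; exact: u_ge0.
apply: lee_nneseries => [n _ _|n _].
  by apply: integral_ge0 => y _; exact: u_ge0.
rewrite /u -integral_mkcondr setIidr; last by move=> y [].
under eq_integral do rewrite EFinM.
rewrite ge0_integralZl_EFin ?c_ge0//; last 3 first.
- exact: mS.
- by move=> y _; rewrite lee_fin sqr_ge0.
- exact: mf'.
rewrite EFinM; apply: lee_wpmul2l; first by rewrite lee_fin c_ge0.
exact/key/ltW/a_gt0.
Qed.

Definition hh (t : R) := (g (Num.max t 0))^-1.

Lemma hh_ge0 t : 0 <= hh t.
Proof. by rewrite invr_ge0 ltW// Hg0// le_max lexx orbT. Qed.

Lemma hh_ni : {homo hh : s t / s <= t >-> t <= s}.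
Proof.
move=> s t st; rewrite /hh lef_pV2 ?posrE ?Hg0 ?le_max ?lexx ?orbT//.
apply: Hgnd; first by rewrite le_max lexx orbT.
exact: le_max2.
Qed.

Lemma mhh (D : set R) : measurable D -> measurable_fun D (fun t => (hh t)%:E).
Proof.
move=> mD; apply/measurable_EFinP; apply: nonincreasing_measurable => //.
exact: hh_ni.
Qed.

Definition I k := `]a k.+2, a k.+1]%classic.

Lemma I_disj i j t : (i < j)%N -> I i t -> I j t -> False.
Proof.
rewrite /I /= !in_itv /= => ij /andP[it _] /andP[_ tj].
have h := a_le i.+2 j.+1 ij.
by have := lt_le_trans it (le_trans tj h); rewrite ltxx.
Qed.

Lemma leb_side : (\sum_(k <oo) (c k * a k)%:E <=
   4%:E * \int[lebesgue_measure]_(t in `[0%R, V]%classic) (hh t)%:E)%E.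
Proof.
have e k : (c k * a k)%:E = (4%:E * (c k * (a k.+1 - a k.+2))%:E)%E.
  by rewrite -EFinM a_diff; congr EFin; field.
rewrite (eq_eseriesr (fun k _ => e k)) nneseriesZl; last first.
  by move=> k _; rewrite lee_fin mulr_ge0 ?c_ge0// a_diff divr_ge0// ltW// a_gt0.
apply: lee_wpmul2l => //.
have H1 : (\sum_(k <oo) (c k * (a k.+1 - a k.+2))%:E <=
    \sum_(k <oo) \int[lebesgue_measure]_(t in I k) (hh t)%:E)%E.
  apply: lee_nneseries => [k _ _|k _].
    by rewrite lee_fin mulr_ge0 ?c_ge0// a_diff divr_ge0// ltW// a_gt0.
  have -> : (c k * (a k.+1 - a k.+2))%:E =
      (\int[lebesgue_measure]_(t in I k) (cst (c k)%:E) t)%E.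
    have lt : a k.+2 < a k.+1.
      by rewrite (aS k.+1) ltr_pdivrMr// ltr_pMr ?ltr1n// a_gt0.
    rewrite integral_cst //=; last exact: measurable_itv.
    rewrite /I lebesgue_measure_itv /= lte_fin lt.
    by rewrite -EFinD EFinM.
  apply: ge0_le_integral => //.
  - exact: measurable_itv.
  - by move=> t _; rewrite lee_fin c_ge0.
  - by apply: mhh; exact: measurable_itv.
  - move=> t; rewrite /I /= in_itv /= => /andP[t1 t2]; rewrite lee_fin /c.
    have -> : a k.+1 = Num.max (a k.+1) 0 by rewrite max_l// ltW// a_gt0.
    exact: hh_ni.
apply: le_trans H1 _.
rewrite -ge0_integral_bigcup //; last 4 first.
- by move=> k; exact: measurable_itv.
- by apply: mhh; apply: bigcupT_measurable => k; exact: measurable_itv.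
- by move=> t _; rewrite lee_fin hh_ge0.
- apply/trivIsetP => i j _ _ ij; apply/seteqP; split => // t [Ii Ij].
  by case: (ltngtP i j) ij => // [lij|lji] _; [exact: (I_disj _ _ _ lij Ii Ij)|exact: (I_disj _ _ _ lji Ij Ii)].
apply: ge0_subset_integral => //.
- by apply: bigcupT_measurable => k; exact: measurable_itv.
- by apply: mhh; exact: measurable_itv.
- by move=> t _; rewrite lee_fin hh_ge0.
move=> t [k _]; rewrite /I /= !in_itv /= => /andP[t1 t2].
rewrite (le_trans (ltW (a_gt0 _)) (ltW t1)) /= (le_trans t2)// -a0; exact: a_le.
Qed.

Definition kk (t : R) := (g (Fc t))^-1.

Lemma mkk : measurable_fun setT kk.
Proof.
apply: nonincreasing_measurable => // s t st; rewrite /kk.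
rewrite lef_pV2 ?posrE ?Hg0 ?F_ge0//.
by apply: Hgnd; [exact: F_ge0|exact: Fc_nd].
Qed.

Hypothesis Hint : forall c : R, 0 < c ->
     (\int[lebesgue_measure]_(t in `[0%R, c]%classic) ((g t)^-1)%:E < +oo)%E.

Lemma main_res :
  (\int[Pi]_(y in [set y : Rd R d | (enorm y <= 1)%R])
      ((enorm y ^+ 2) / g (fine (Vbar Pi (enorm y))))%:E < +oo)%E.
Proof.
have H0 : (\int[Pi]_(y in B 1%R) ((f y) / g (F (enorm y)))%:E <=
    \int[Pi]_(y in B 1%R) (\sum_(k <oo) u k y))%E.
  apply: ge0_le_integral.
  - exact: mB.
  - move=> y _; rewrite lee_fin divr_ge0 ?sqr_ge0// ltW// Hg0// F_ge0//.
  - have mI : measurable_fun (B 1%R) (fun y => (f y * kk (enorm y))%:E).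
      apply/measurable_EFinP; apply: measurable_funM.
        apply: measurable_funX; exact: measurable_funS (@enorm_meas R d).
      apply: measurableT_comp; first exact: mkk.
      exact: measurable_funS (@enorm_meas R d).
    have eI : {in B 1%R, (fun y => (f y * kk (enorm y))%:E) =1
        (fun y => (f y / g (F (enorm y)))%:E)}.
      move=> z; rewrite inE /= => z1; congr EFin; rewrite /kk /Fc.
      by rewrite (min_idPl z1).
    exact: (eq_measurable_fun _ eI mI).
  - have := @ge0_emeasurable_sum _ _ _ (B 1%R) u xpredT
      (fun k y _ _ => u_ge0 k y) (fun k _ => measurable_funS measurableT (subsetT _) (mu_ k)).
    by apply; exact: mB.
  - exact: ptwise.
apply: le_lt_trans H0 _; apply: le_lt_trans pi_side _.
apply: le_lt_trans leb_side _.
have -> : (\int[lebesgue_measure]_(t in `[0%R, V]%classic) (hh t)%:E =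
    \int[lebesgue_measure]_(t in `[0%R, V]%classic) ((g t)^-1)%:E)%E.
  apply: eq_integral => t; rewrite inE /= in_itv /= => /andP[t0 _].
  by rewrite /hh max_l.
by apply: lte_mul_pinfty => //; exact: Hint Vpos.
Qed.

End Main.

Theorem lemma4p1 (R : realType) (d : nat)
  (Pi : {measure set (Rd R d) -> \bar R}) (g : R -> R) :
  levy_measure Pi ->
  (forall t : R, 0 < t -> (0 < Vbar Pi t)%E) ->
  (forall t : R, 0 <= t -> 0 < g t) ->
  (forall s t : R, 0 <= s -> s <= t -> g s <= g t) ->
  (forall c : R, 0 < c ->
     (\int[lebesgue_measure]_(t in `[0%R, c]%classic) ((g t)^-1)%:E < +oo)%E) ->
  (\int[Pi]_(y in [set y : Rd R d | (enorm y <= 1)%R])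
      ((enorm y ^+ 2) / g (fine (Vbar Pi (enorm y))))%:E < +oo)%E.
Proof.
move=> HL HV Hg0 Hgnd Hint.
exact: (@main_res R d Pi HL HV g Hg0 Hgnd Hint).
Qed.
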